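(* Let $A\overset{i}{\to}U\overset{j}{\to}G$ and $A\overset{i'}{\to}U'\overset{j'}{\to}G$ be extensions of a semilattice of groups $A$ by a group $G$, and let $\pi:U\to S$, $\kappa:S\to G$ and $\pi':U'\to S'$, $\kappa':S'\to G$ be epimorphisms onto inverse semigroups such that $A\overset{i}{\to}U\overset{\pi}{\to}S$ and $A\overset{i'}{\to}U'\overset{\pi'}{\to}S'$ are extensions of $A$ by $S$ and by $S'$ respectively, $j=\kappa\circ\pi$ and $j'=\kappa'\circ\pi'$. Given a homomorphism $\mu:U\to U'$ with $\mu\circ i=i'$ and $j'\circ\mu=j$, there exists a homomorphism $\nu:S\to S'$ such that $\nu\circ\pi=\pi'\circ\mu$ and $\kappa'\circ\nu=\kappa$. Moreover, if $\mu$ is injective then $\nu$ is injective, and if $\mu$ is surjective then $\nu$ is surjective.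
   Context: A semilattice of groups is an inverse semigroup whose idempotents are central. An extension of $A$ by a group $G$ is an inverse semigroup $U$ with a monomorphism $i:A\to U$ and an epimorphism $j:U\to G$ with $i(A)=j^{-1}(1)$. An extension of $A$ by an inverse semigroup $S$ is an inverse semigroup $U$ with a monomorphism $i:A\to U$ and an idempotent-separating epimorphism $\pi:U\to S$ with $i(A)=\pi^{-1}(E(S))$. *)

(* Defs.v *)
Record InvSemigroup := {
  isg_car :> Type;
  isg_mul : isg_car -> isg_car -> isg_car;
  isg_assoc : forall x y z, isg_mul x (isg_mul y z) = isg_mul (isg_mul x y) z;
  isg_unique_inverse : forall x, exists! y,
      isg_mul (isg_mul x y) x = x /\ isg_mul (isg_mul y x) y = y
}.

Arguments isg_mul {i} _ _.

Record Group := {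
  grp_isg :> InvSemigroup;
  grp_one : grp_isg;
  grp_inv : grp_isg -> grp_isg;
  grp_mul1g : forall x, isg_mul grp_one x = x;
  grp_mulg1 : forall x, isg_mul x grp_one = x;
  grp_mulVg : forall x, isg_mul (grp_inv x) x = grp_one;
  grp_mulgV : forall x, isg_mul x (grp_inv x) = grp_one
}.

Definition idempotent {S : InvSemigroup} (x : S) : Prop := isg_mul x x = x.

Definition semilattice_of_groups (S : InvSemigroup) : Prop :=
  forall e x : S, idempotent e -> isg_mul e x = isg_mul x e.

Definition is_hom {S T : InvSemigroup} (f : S -> T) : Prop :=
  forall x y : S, f (isg_mul x y) = isg_mul (f x) (f y).

Definition injective_map {X Y : Type} (f : X -> Y) : Prop :=
  forall x y, f x = f y -> x = y.

Definition surjective_map {X Y : Type} (f : X -> Y) : Prop :=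
  forall y, exists x, f x = y.

Definition monomorphism {S T : InvSemigroup} (f : S -> T) : Prop :=
  is_hom f /\ injective_map f.

Definition epimorphism {S T : InvSemigroup} (f : S -> T) : Prop :=
  is_hom f /\ surjective_map f.

Definition idempotent_separating {S T : InvSemigroup} (f : S -> T) : Prop :=
  forall e e' : S, idempotent e -> idempotent e' -> f e = f e' -> e = e'.

Definition group_extension {A U : InvSemigroup} {G : Group}
    (i : A -> U) (j : U -> G) : Prop :=
  monomorphism i /\ epimorphism j /\
  (forall u : U, (exists a, i a = u) <-> j u = grp_one G).

Definition isg_extension {A U S : InvSemigroup}
    (i : A -> U) (pi : U -> S) : Prop :=
  monomorphism i /\ epimorphism pi /\ idempotent_separating pi /\
  (forall u : U, (exists a, i a = u) <-> idempotent (pi u)).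

(* Main.v *)
Require Import Defs.
From Stdlib Require Import ClassicalEpsilon.

Notation "x ** y" := (isg_mul x y) (at level 40, left associativity).

Definition inv {S : InvSemigroup} (x : S) : S :=
  proj1_sig (constructive_indefinite_description _ (isg_unique_inverse S x)).

Lemma inv_spec {S : InvSemigroup} (x : S) :
  (x ** inv x ** x = x /\ inv x ** x ** inv x = inv x) /\
  (forall y, x ** y ** x = x /\ y ** x ** y = y -> inv x = y).
Proof.
  unfold inv. destruct (constructive_indefinite_description _ _) as [y [H1 H2]].
  simpl. split; [exact H1|]. intros z Hz. exact (H2 z Hz).
Qed.

Lemma inv1 {S : InvSemigroup} (x : S) : x ** inv x ** x = x.
Proof. apply (inv_spec x). Qed.
Lemma inv2 {S : InvSemigroup} (x : S) : inv x ** x ** inv x = inv x.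
Proof. apply (inv_spec x). Qed.
Lemma inv_uniq {S : InvSemigroup} (x y : S) :
  x ** y ** x = x -> y ** x ** y = y -> inv x = y.
Proof. intros; apply (inv_spec x); auto. Qed.

Lemma idem_self_inv {S : InvSemigroup} (e : S) : idempotent e -> inv e = e.
Proof. unfold idempotent; intro H. apply inv_uniq; rewrite !H; reflexivity. Qed.

Lemma idem_mul {S : InvSemigroup} (e f : S) :
  idempotent e -> idempotent f -> idempotent (e ** f).
Proof.
  unfold idempotent; intros He Hf.
  set (x := inv (e ** f)).
  assert (Hx1 := inv1 (e ** f)). assert (Hx2 := inv2 (e ** f)). fold x in Hx1, Hx2.
  assert (E : inv (e ** f) = f ** x ** e).
  { apply inv_uniq.
    - transitivity (e ** (f ** f) ** x ** (e ** e) ** f).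
      + rewrite !isg_assoc; reflexivity.
      + rewrite He, Hf. rewrite <- Hx1 at 2. rewrite !isg_assoc; reflexivity.
    - transitivity (f ** x ** (e ** e) ** (f ** f) ** x ** e).
      + rewrite !isg_assoc; reflexivity.
      + rewrite He, Hf. transitivity (f ** (x ** (e ** f) ** x) ** e).
        * rewrite !isg_assoc; reflexivity.
        * rewrite Hx2; reflexivity. }
  fold x in E.
  assert (Hxx : x ** x = x).
  { rewrite E at 1 2. transitivity (f ** (x ** (e ** f) ** x) ** e).
    + rewrite !isg_assoc; reflexivity.
    + rewrite Hx2. rewrite <- E. reflexivity. }
  assert (Hix : inv x = e ** f).
  { apply inv_uniq; [ exact Hx2 | exact Hx1 ]. }
  rewrite idem_self_inv in Hix by exact Hxx. rewrite <- Hix. exact Hxx.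
Qed.

Lemma idem_comm {S : InvSemigroup} (e f : S) :
  idempotent e -> idempotent f -> e ** f = f ** e.
Proof.
  intros He Hf.
  assert (Hef := idem_mul e f He Hf). assert (Hfe := idem_mul f e Hf He).
  unfold idempotent in *.
  rewrite <- (idem_self_inv (e ** f)) by exact Hef.
  apply inv_uniq.
  - transitivity ((e ** f) ** (f ** e) ** (e ** f)); [reflexivity|].
    transitivity (e ** (f ** f) ** (e ** e) ** f); [rewrite !isg_assoc; reflexivity|].
    rewrite He, Hf. transitivity ((e ** f) ** (e ** f)); [rewrite !isg_assoc; reflexivity| exact Hef].
  - transitivity (f ** (e ** e) ** (f ** f) ** e); [rewrite !isg_assoc; reflexivity|].
    rewrite He, Hf. transitivity ((f ** e) ** (f ** e)); [rewrite !isg_assoc; reflexivity| exact Hfe].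
Qed.

Lemma hom_inv {S T : InvSemigroup} (f : S -> T) (x : S) :
  is_hom f -> inv (f x) = f (inv x).
Proof.
  intro Hf. apply inv_uniq; rewrite <- !Hf; [rewrite inv1 | rewrite inv2]; reflexivity.
Qed.

Lemma idem_xinvx {S : InvSemigroup} (x : S) : idempotent (x ** inv x).
Proof. unfold idempotent. rewrite isg_assoc, inv1. reflexivity. Qed.

Lemma idem_invxx {S : InvSemigroup} (x : S) : idempotent (inv x ** x).
Proof. unfold idempotent. rewrite isg_assoc, inv2. reflexivity. Qed.

Lemma key {U S : InvSemigroup} (p : U -> S) (u1 u2 : U) :
  is_hom p ->
  u1 ** inv u1 = u2 ** inv u2 ->
  idempotent (p (inv u1 ** u2)) -> idempotent (p (inv u2 ** u1)) ->
  p u1 = p u2.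
Proof.
  intros Hp E Hc Hd.
  assert (H2 : u2 = u1 ** (inv u1 ** u2)).
  { rewrite isg_assoc, E, inv1. reflexivity. }
  assert (H1 : u1 = u2 ** (inv u2 ** u1)).
  { rewrite isg_assoc, <- E, inv1. reflexivity. }
  set (f := p (inv u1 ** u2)) in *. set (f' := p (inv u2 ** u1)) in *.
  assert (Y : p u2 = p u1 ** f) by (rewrite H2 at 1; apply Hp).
  assert (X : p u1 = p u2 ** f') by (rewrite H1 at 1; apply Hp).
  assert (Xf' : p u1 ** f' = p u1).
  { rewrite X at 1. rewrite <- isg_assoc. rewrite Hd. symmetry; exact X. }
  rewrite X at 1. rewrite Y. rewrite <- isg_assoc.
  rewrite (idem_comm f f' Hc Hd). rewrite isg_assoc, Xf'. reflexivity.
Qed.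

Lemma sep_eq {U S : InvSemigroup} (p : U -> S) (u1 u2 : U) :
  is_hom p -> idempotent_separating p -> p u1 = p u2 ->
  u1 ** inv u1 = u2 ** inv u2.
Proof.
  intros Hp Hs E. apply Hs; try apply idem_xinvx.
  rewrite !Hp, <- !(hom_inv p) by exact Hp. rewrite E. reflexivity.
Qed.

Lemma idem_part {U S : InvSemigroup} (p : U -> S) (u1 u2 : U) :
  is_hom p -> p u1 = p u2 -> idempotent (p (inv u1 ** u2)).
Proof.
  intros Hp E. rewrite Hp, <- (hom_inv p) by exact Hp. rewrite E. apply idem_invxx.
Qed.

Theorem proposition4p6
  (A U U' S S' : InvSemigroup) (G : Group)
  (i : A -> U) (j : U -> G) (i' : A -> U') (j' : U' -> G)
  (pi : U -> S) (kappa : S -> G) (pi' : U' -> S') (kappa' : S' -> G)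
  (mu : U -> U')
  (hA : semilattice_of_groups A)
  (hext : group_extension i j) (hext' : group_extension i' j')
  (hpi : epimorphism pi) (hkappa : epimorphism kappa)
  (hpi' : epimorphism pi') (hkappa' : epimorphism kappa')
  (hS : isg_extension i pi) (hS' : isg_extension i' pi')
  (hj : forall u, j u = kappa (pi u)) (hj' : forall u, j' u = kappa' (pi' u))
  (hmu : is_hom mu) (hmui : forall a, mu (i a) = i' a)
  (hmuj : forall u, j' (mu u) = j u) :
  exists nu : S -> S',
    is_hom nu /\
    (forall u, nu (pi u) = pi' (mu u)) /\
    (forall s, kappa' (nu s) = kappa s) /\
    (injective_map mu -> injective_map nu) /\
    (surjective_map mu -> surjective_map nu).
Proof.
  destruct hS as [[hi _] [[hpih hpis] [hsep hker]]].
  destruct hS' as [[hi' hi'inj] [[hpih' hpis'] [hsep' hker']]].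
  assert (hcomp : is_hom (fun u => pi' (mu u))).
  { intros x y. rewrite hmu. apply hpih'. }
  assert (wd : forall u1 u2, pi u1 = pi u2 -> pi' (mu u1) = pi' (mu u2)).
  { intros u1 u2 E.
    assert (E1 := sep_eq pi u1 u2 hpih hsep E).
    assert (I12 : forall v1 v2, pi v1 = pi v2 -> idempotent (pi' (mu (inv v1 ** v2)))).
    { intros v1 v2 Ev. destruct (proj2 (hker _) (idem_part pi v1 v2 hpih Ev)) as [a Ha].
      rewrite <- Ha, hmui. apply hker'. eauto. }
    apply key; [exact hpih' | | |].
    - rewrite !(hom_inv mu) by exact hmu. rewrite <- !hmu, E1. reflexivity.
    - rewrite (hom_inv mu) by exact hmu. rewrite <- hmu. apply I12; exact E.
    - rewrite (hom_inv mu) by exact hmu. rewrite <- hmu. apply I12; symmetry; exact E. }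
  set (pre := fun s : S => proj1_sig (constructive_indefinite_description _ (hpis s))).
  assert (Hpre : forall s, pi (pre s) = s).
  { intro s. unfold pre. destruct (constructive_indefinite_description _ _); assumption. }
  exists (fun s => pi' (mu (pre s))).
  assert (Hnu : forall u, pi' (mu (pre (pi u))) = pi' (mu u)).
  { intro u. apply wd. apply Hpre. }
  split; [|split; [|split; [|split]]].
  - intros x y. rewrite <- (Hpre x), <- (Hpre y), <- hpih, !Hnu. apply hcomp.
  - exact Hnu.
  - intro s. rewrite <- (Hpre s) at 2. rewrite <- hj', hmuj, hj, Hpre. reflexivity.
  - intros Hinj x y Exy. rewrite <- (Hpre x), <- (Hpre y).
    set (u1 := pre x) in *. set (u2 := pre y) in *. clearbody u1 u2.
    assert (I12 : forall v1 v2, pi' (mu v1) = pi' (mu v2) -> idempotent (pi (inv v1 ** v2))).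
    { intros v1 v2 Ev.
      assert (Hid := idem_part pi' (mu v1) (mu v2) hpih' Ev).
      rewrite (hom_inv mu), <- hmu in Hid by exact hmu.
      destruct (proj2 (hker' _) Hid) as [a Ha].
      rewrite <- hmui in Ha. apply Hinj in Ha. rewrite <- Ha. apply hker. eauto. }
    apply key; [exact hpih | | |].
    + apply Hinj. rewrite !hmu, <- !(hom_inv mu) by exact hmu.
      apply (sep_eq pi'); assumption.
    + apply I12; exact Exy.
    + apply I12; symmetry; exact Exy.
  - intros Hsur s'. destruct (hpis' s') as [u' Hu']. destruct (Hsur u') as [u Hu].
    exists (pi u). rewrite Hnu, Hu. exact Hu'.
Qed.
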